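(* Let $K$ be either of the (two non-isomorphic) $2$-uniform tilings of the plane whose vertex types are $[3^3,4^2]$ and $[4^4]$. If $X$ is a map on the torus that is a quotient $X=K/\Gamma$ of $K$, then the vertices of $X$ form exactly $2$ orbits under ${\rm Aut}(X)$.
   Context: A map is a polyhedral map: a cellular embedding of a connected graph in a closed surface such that the intersection of any two distinct faces is empty, a single vertex, or a single edge. For a vertex $u$, the faces containing $u$ form a cyclic sequence (the face-cycle at $u$); if this cyclic sequence consists of consecutive blocks of $n_1$ $p_1$-gons, then $n_2$ $p_2$-gons, ..., then $n_k$ $p_k$-gons, with cyclically consecutive $p_i$ distinct, then $u$ is said to have type $[p_1^{n_1},\dots,p_k^{n_k}]$ (defined up to cyclic shift and reversal). A $2$-uniform tiling is an edge-to-edge tiling of the Euclidean plane $\mathbb{R}^2$ by regular polygons whose symmetry group has exactly two orbits on the set of vertices; viewed as a map on the plane, its vertices have (at most) two types, listed as $[W;Z]$. (Up to isomorphism there are exactly $20$ such tilings.) For a map $K$ on the plane, a quotient of $K$ on the torus is a map $X$ on the torus together with a polyhedral covering map $\eta:K\to X$ with $X=K/\Gamma$, where $\Gamma\le {\rm Aut}(K)$ is a subgroup acting without fixed vertices, edges or faces and $K/\Gamma$ is homeomorphic to the torus. ${\rm Aut}(X)$ denotes the automorphism group of the map $X$, acting on its vertex set $V(X)$. *)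

(* Defs.v *)
From Stdlib Require Import ZArith List.
Import ListNotations.
Open Scope Z_scope.

(* Vertices: (i, j) = i-th vertex on the j-th horizontal line. *)
Definition V := (Z * Z)%type.

(* Faces, listed counter-clockwise.  Row j (between lines j and j+1) is a
   strip of triangles if j mod p = 0, and a strip of squares otherwise.
   Geometrically vertex (i,j) sits at x = i + (#triangle rows below j)/2,
   y = j * height; so in a triangle row the upper line is shifted by 1/2. *)
Definition sq (i j : Z) : list V := [(i, j); (i + 1, j); (i + 1, j + 1); (i, j + 1)].
Definition up (i j : Z) : list V := [(i, j); (i + 1, j); (i, j + 1)].
Definition dn (i j : Z) : list V := [(i + 1, j); (i + 1, j + 1); (i, j + 1)].

Definition faceK (p : Z) (f : list V) : Prop :=
  exists i j : Z,
    (j mod p = 0 /\ (f = up i j \/ f = dn i j)) \/ (j mod p <> 0 /\ f = sq i j).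

Definition rotl {A : Type} (k : nat) (l : list A) : list A :=
  skipn k l ++ firstn k l.

Definition adj_in (l : list V) (u v : V) : Prop :=
  exists (k : nat) (rest : list V), rotl k l = u :: v :: rest \/ rotl k l = v :: u :: rest.

Definition edgeK (p : Z) (u v : V) : Prop := exists f, faceK p f /\ adj_in f u v.

Definition set_image (s : V -> V) (f g : list V) : Prop :=
  forall z, In z g <-> exists x, In x f /\ s x = z.

Definition isAutK (p : Z) (s : V -> V) : Prop :=
  (exists t : V -> V, forall x, t (s x) = x /\ s (t x) = x) /\
  (forall u v, edgeK p u v <-> edgeK p (s u) (s v)) /\
  (forall f, faceK p f -> exists g, faceK p g /\ set_image s f g) /\
  (forall g, faceK p g -> exists f, faceK p f /\ set_image s f g).

Definition orient_pres (p : Z) (s : V -> V) : Prop :=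
  forall f, faceK p f -> exists g k, faceK p g /\ map s f = rotl k g.

Definition is_group (G : (V -> V) -> Prop) : Prop :=
  G (fun x => x) /\
  (forall g h, G g -> G h -> G (fun x => g (h x))) /\
  (forall g, G g -> exists h, G h /\ forall x, h (g x) = x /\ g (h x) = x).

Definition sameorb (G : (V -> V) -> Prop) (u v : V) : Prop :=
  exists g, G g /\ g u = v.

Definition free_action (p : Z) (G : (V -> V) -> Prop) : Prop :=
  forall g, G g ->
    ((exists v, g v = v) \/
     (exists u v, edgeK p u v /\ ((g u = u /\ g v = v) \/ (g u = v /\ g v = u))) \/
     (exists f, faceK p f /\ set_image g f f)) ->
    forall x, g x = x.

(* K/G is homeomorphic to the torus (combinatorial rendering):
   G <= Aut(K) a subgroup acting freely, orientation preservingly,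
   with compact (finite) quotient. *)
Definition torus_quotient (p : Z) (G : (V -> V) -> Prop) : Prop :=
  is_group G /\
  (forall g, G g -> isAutK p g) /\
  free_action p G /\
  (forall g, G g -> orient_pres p g) /\
  (exists L : list V, forall v, exists u, In u L /\ sameorb G u v).

(* X = K/G is a polyhedral map and eta : K -> X is a polyhedral covering. *)
Definition polyhedral_quotient (p : Z) (G : (V -> V) -> Prop) : Prop :=
  (* eta is injective on each face *)
  (forall f, faceK p f -> forall x y, In x f -> In y f -> sameorb G x y -> x = y) /\
  (* two distinct faces of X meet in nothing, a vertex, or an edge of both *)
  (forall f g, faceK p f -> faceK p g ->
     ~ (exists h, G h /\ set_image h f g) ->
     (forall x y x' y', In x f -> In y f -> In x' g -> In y' g ->
        sameorb G x x' -> sameorb G y y' -> x <> y ->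
        adj_in f x y /\ adj_in g x' y') /\
     ~ (exists x y z x' y' z', In x f /\ In y f /\ In z f /\
          x <> y /\ y <> z /\ x <> z /\ In x' g /\ In y' g /\ In z' g /\
          sameorb G x x' /\ sameorb G y y' /\ sameorb G z z')) /\
  (* no multiple edges in X *)
  (forall u v u' v', edgeK p u v -> edgeK p u' v' ->
     sameorb G u u' -> sameorb G v v' ->
     exists h, G h /\ h u = u' /\ h v = v').

(* automorphisms of X = K/G, acting on vertices of X = G-orbits, given by
   representative maps t : V -> V *)
Definition isAutX (p : Z) (G : (V -> V) -> Prop) (t : V -> V) : Prop :=
  (forall u v, sameorb G u v -> sameorb G (t u) (t v)) /\
  (forall u v, sameorb G (t u) (t v) -> sameorb G u v) /\
  (forall w, exists u, sameorb G (t u) w) /\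
  (forall u v, edgeK p u v ->
     exists u' v', edgeK p u' v' /\ sameorb G (t u) u' /\ sameorb G (t v) v') /\
  (forall u' v', edgeK p u' v' ->
     exists u v, edgeK p u v /\ sameorb G (t u) u' /\ sameorb G (t v) v') /\
  (forall f, faceK p f -> exists g, faceK p g /\
     (forall x, In x f -> exists y, In y g /\ sameorb G (t x) y) /\
     (forall y, In y g -> exists x, In x f /\ sameorb G (t x) y)) /\
  (forall g, faceK p g -> exists f, faceK p f /\
     (forall x, In x f -> exists y, In y g /\ sameorb G (t x) y) /\
     (forall y, In y g -> exists x, In x f /\ sameorb G (t x) y)).

Definition autX_orb (p : Z) (G : (V -> V) -> Prop) (u v : V) : Prop :=
  exists t, isAutX p G t /\ sameorb G (t u) v.

(* Main.v *)
Require Import Defs.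
From Stdlib Require Import ZArith List Lia.
Import ListNotations.
Open Scope Z_scope.

Ltac modfacts := repeat match goal with
 | |- context [?x mod ?c] => 
   lazymatch goal with H : x = c * (x / c) + x mod c |- _ => fail | _ =>
   pose proof (Z.div_mod x c ltac:(lia)); pose proof (Z.mod_pos_bound x c ltac:(lia)) end
 | H: context [?x mod ?c] |- _ => 
   lazymatch goal with H : x = c * (x / c) + x mod c |- _ => fail | _ =>
   pose proof (Z.div_mod x c ltac:(lia)); pose proof (Z.mod_pos_bound x c ltac:(lia)) end
 end.
Ltac zl := modfacts; lia.
Ltac demod := repeat match goal with
 | H : ?x mod ?c = 0 |- _ => let q := fresh "q" in let Hq := fresh "Hq" in
     pose proof (Z.div_mod x c ltac:(lia)) as Hq; rewrite H in Hq; set (q := x / c) in Hq; clearbody q; clear H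
 | H : ?x mod ?c <> 0 |- _ => let q := fresh "q" in let r := fresh "r" in let Hq := fresh "Hq" in let Hr := fresh "Hr" in
     pose proof (Z.div_mod x c ltac:(lia)) as Hq; pose proof (Z.mod_pos_bound x c ltac:(lia)) as Hr;
     set (q := x / c) in Hq; set (r := x mod c) in *; clearbody q r
 end.

Definition tri6 (x1 y1 x2 y2 x3 y3 a b : Z) : Prop :=
  (x1=a/\y1=b/\x2=a+1/\y2=b/\x3=a/\y3=b+1) \/
  (x1=a+1/\y1=b/\x2=a/\y2=b+1/\x3=a/\y3=b) \/
  (x1=a/\y1=b+1/\x2=a/\y2=b/\x3=a+1/\y3=b) \/
  (x1=a+1/\y1=b/\x2=a+1/\y2=b+1/\x3=a/\y3=b+1) \/
  (x1=a+1/\y1=b+1/\x2=a/\y2=b+1/\x3=a+1/\y3=b) \/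
  (x1=a/\y1=b+1/\x2=a+1/\y2=b/\x3=a+1/\y3=b+1).

Definition sq4 (x0 y0 x1 y1 x2 y2 x3 y3 a b : Z) : Prop :=
  (x0=a/\y0=b/\x1=a+1/\y1=b/\x2=a+1/\y2=b+1/\x3=a/\y3=b+1) \/
  (x0=a+1/\y0=b/\x1=a+1/\y1=b+1/\x2=a/\y2=b+1/\x3=a/\y3=b) \/
  (x0=a+1/\y0=b+1/\x1=a/\y1=b+1/\x2=a/\y2=b/\x3=a+1/\y3=b) \/
  (x0=a/\y0=b+1/\x1=a/\y1=b/\x2=a+1/\y2=b/\x3=a+1/\y3=b+1).

Ltac img_tac s OP f i j :=
  let g := fresh "g" in let k := fresh "k" in let Hg := fresh in let Hm := fresh in
  destruct (OP f) as [g [k [Hg Hm]]]; [ exists i, j; first [left; split; [eassumption| auto] | right; split; [eassumption|auto]] | ];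
  simpl in Hm;
  repeat match goal with E : s ?x = _ |- _ => rewrite E in Hm end;
  let a := fresh "a" in let b := fresh "b" in let Hb := fresh "Hb" in
  destruct Hg as [a [b [[Hb [->| ->]] | [Hb ->]]]]; unfold up, dn, sq, rotl in Hm;
  destruct k as [|[|[|[|[|k]]]]]; simpl in Hm; try discriminate;
  injection Hm; intros; subst; exists a, b; split; auto; unfold tri6, sq4; lia.

Lemma up_img p s i j x1 y1 x2 y2 x3 y3 : orient_pres p s -> j mod p = 0 ->
  s (i,j) = (x1,y1) -> s (i+1,j) = (x2,y2) -> s (i,j+1) = (x3,y3) ->
  exists a b, b mod p = 0 /\ tri6 x1 y1 x2 y2 x3 y3 a b.
Proof. intros OP Hj E1 E2 E3. img_tac s OP (up i j) i j. Qed.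

Lemma dn_img p s i j x1 y1 x2 y2 x3 y3 : orient_pres p s -> j mod p = 0 ->
  s (i+1,j) = (x1,y1) -> s (i+1,j+1) = (x2,y2) -> s (i,j+1) = (x3,y3) ->
  exists a b, b mod p = 0 /\ tri6 x1 y1 x2 y2 x3 y3 a b.
Proof. intros OP Hj E1 E2 E3. img_tac s OP (dn i j) i j. Qed.

Lemma sq_img p s i j x0 y0 x1 y1 x2 y2 x3 y3 : orient_pres p s -> j mod p <> 0 ->
  s (i,j) = (x0,y0) -> s (i+1,j) = (x1,y1) -> s (i+1,j+1) = (x2,y2) -> s (i,j+1) = (x3,y3) ->
  exists a b, b mod p <> 0 /\ sq4 x0 y0 x1 y1 x2 y2 x3 y3 a b.
Proof. intros OP Hj E0 E1 E2 E3. img_tac s OP (sq i j) i j. Qed.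

Definition inj (s : V -> V) := forall x y, s x = s y -> x = y.

Ltac splitall := repeat match goal with H : _ \/ _ |- _ => destruct H | H : _ /\ _ |- _ => destruct H end.


Lemma Aff_up p s i j x1 y1 x2 y2 x3 y3 : (p = 3 \/ p = 4) -> inj s -> orient_pres p s -> j mod p = 0 ->
  s (i,j) = (x1,y1) -> s (i+1,j) = (x2,y2) -> s (i,j+1) = (x3,y3) ->
  (x2=x1+1/\y2=y1/\x3=x1/\y3=y1+1) \/ (x2=x1-1/\y2=y1/\x3=x1/\y3=y1-1).
Proof.
  intros Hp I OP Hj E1 E2 E3.
  destruct (up_img p s i j x1 y1 x2 y2 x3 y3) as [a [b [Hb T]]]; auto.
  destruct (s (i,j-1)) as [u0 v0] eqn:F0; destruct (s (i+1,j-1)) as [u1 v1] eqn:F1.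
  assert (F2: s (i+1,j-1+1) = (x2,y2)) by (replace (j-1+1) with j by lia; auto).
  assert (F3: s (i,j-1+1) = (x1,y1)) by (replace (j-1+1) with j by lia; auto).
  destruct (sq_img p s i (j-1) u0 v0 u1 v1 x2 y2 x1 y1) as [a' [b' [Hb' Q]]]; auto.
  { destruct Hp; subst; zl. }
  destruct (s (i+1,j+1)) as [xd yd] eqn:ED.
  destruct (dn_img p s i j x2 y2 xd yd x3 y3) as [a'' [b'' [Hb'' T']]]; auto.
  assert (NE: ~(xd = x1 /\ yd = y1)).
  { intros [? ?]; subst. assert (s (i+1,j+1) = s (i,j)) by congruence. apply I in H. injection H; lia. }
  clear E1 E2 E3 F0 F1 F2 F3 ED OP I.
  unfold tri6, sq4 in *.
  destruct Hp; subst; demod;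
  (destruct T as [T|[T|[T|[T|[T|T]]]]]; [left; lia | | | | right; lia | ]; exfalso; splitall; subst; lia).
Qed.

Lemma Aff_dn p s i j x1 y1 x2 y2 x3 y3 : (p = 3 \/ p = 4) -> inj s -> orient_pres p s -> j mod p = 0 ->
  s (i+1,j) = (x1,y1) -> s (i+1,j+1) = (x2,y2) -> s (i,j+1) = (x3,y3) ->
  (x2=x1/\y2=y1+1/\x3=x1-1/\y3=y1+1) \/ (x2=x1/\y2=y1-1/\x3=x1+1/\y3=y1-1).
Proof.
  intros Hp I OP Hj E1 E2 E3.
  destruct (dn_img p s i j x1 y1 x2 y2 x3 y3) as [a [b [Hb T]]]; auto.
  destruct (s (i+1,j+1+1)) as [u2 v2] eqn:F2; destruct (s (i,j+1+1)) as [u3 v3] eqn:F3.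
  destruct (sq_img p s i (j+1) x3 y3 x2 y2 u2 v2 u3 v3) as [a' [b' [Hb' Q]]]; auto.
  { destruct Hp; subst; zl. }
  destruct (s (i,j)) as [xa ya] eqn:EA.
  destruct (up_img p s i j xa ya x1 y1 x3 y3) as [a'' [b'' [Hb'' T']]]; auto.
  assert (NE: ~(xa = x2 /\ ya = y2)).
  { intros [? ?]; subst. assert (s (i+1,j+1) = s (i,j)) by congruence. apply I in H. injection H; lia. }
  clear E1 E2 E3 F2 F3 EA OP I.
  unfold tri6, sq4 in *.
  destruct Hp; subst; demod;
  (destruct T as [T|[T|[T|[T|[T|T]]]]]; [ | | right; lia | left; lia | | ]; exfalso; splitall; subst; lia).
Qed.

Lemma Aff_sq_adj p s i j x0 y0 x1 y1 x2 y2 x3 y3 : (p = 3 \/ p = 4) -> inj s -> orient_pres p s ->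
  j mod p <> 0 -> ((j+1) mod p = 0 \/ (j-1) mod p = 0) ->
  s (i,j) = (x0,y0) -> s (i+1,j) = (x1,y1) -> s (i+1,j+1) = (x2,y2) -> s (i,j+1) = (x3,y3) ->
  (x1=x0+1/\y1=y0/\x2=x0+1/\y2=y0+1/\x3=x0/\y3=y0+1) \/
  (x1=x0-1/\y1=y0/\x2=x0-1/\y2=y0-1/\x3=x0/\y3=y0-1).
Proof.
  intros Hp I OP Hj Hadj E0 E1 E2 E3.
  destruct (sq_img p s i j x0 y0 x1 y1 x2 y2 x3 y3) as [a [b [Hb Q]]]; auto.
  assert (HH: y2 = y3 \/ y0 = y1).
  { destruct Hadj as [Ha|Ha].
    - left. destruct (s (i, j+1+1)) as [u v] eqn:F.
      destruct (Aff_up p s i (j+1) x3 y3 x2 y2 u v) as [A|A]; auto; lia.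
    - right. destruct (s (i+1, j-1)) as [u v] eqn:F.
      assert (F1 : s (i+1,j-1+1) = (x1,y1)) by (replace (j-1+1) with j by lia; auto).
      assert (F0 : s (i,j-1+1) = (x0,y0)) by (replace (j-1+1) with j by lia; auto).
      destruct (Aff_dn p s i (j-1) u v x1 y1 x0 y0) as [A|A]; auto; lia. }
  clear E0 E1 E2 E3 OP I Hadj.
  unfold sq4 in *.
  destruct Q as [Q|[Q|[Q|Q]]]; [left; lia | | right; lia | ]; exfalso; splitall; subst; lia.
Qed.

Lemma Aff_sq p s i j x0 y0 x1 y1 x2 y2 x3 y3 : (p = 3 \/ p = 4) -> inj s -> orient_pres p s ->
  j mod p <> 0 ->
  s (i,j) = (x0,y0) -> s (i+1,j) = (x1,y1) -> s (i+1,j+1) = (x2,y2) -> s (i,j+1) = (x3,y3) ->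
  (x1=x0+1/\y1=y0/\x2=x0+1/\y2=y0+1/\x3=x0/\y3=y0+1) \/
  (x1=x0-1/\y1=y0/\x2=x0-1/\y2=y0-1/\x3=x0/\y3=y0-1).
Proof.
  intros Hp I OP Hj E0 E1 E2 E3.
  assert (Hc : ((j+1) mod p = 0 \/ (j-1) mod p = 0) \/ (p = 4 /\ (j-1) mod p <> 0 /\ (j-1-1) mod p = 0)).
  { destruct Hp; subst; zl. }
  destruct Hc as [Hc|[-> [Hc1 Hc2]]]. { eapply Aff_sq_adj; eauto. }
  destruct (sq_img 4 s i j x0 y0 x1 y1 x2 y2 x3 y3) as [a [b [Hb Q]]]; auto.
  destruct (s (i, j-1)) as [u0 v0] eqn:F0. destruct (s (i+1, j-1)) as [u1 v1] eqn:F1.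
  assert (F2 : s (i+1,j-1+1) = (x1,y1)) by (replace (j-1+1) with j by lia; auto).
  assert (F3 : s (i,j-1+1) = (x0,y0)) by (replace (j-1+1) with j by lia; auto).
  assert (HH : y0 = y1).
  { destruct (Aff_sq_adj 4 s i (j-1) u0 v0 u1 v1 x1 y1 x0 y0) as [A|A]; auto; lia. }
  clear E0 E1 E2 E3 F0 F1 F2 F3 OP I.
  unfold sq4 in *.
  destruct Q as [Q|[Q|[Q|Q]]]; [left; lia | | right; lia | ]; exfalso; splitall; subst; lia.
Qed.

Definition Loc (s : V -> V) i j d := forall x y, s (i,j) = (x,y) -> s (i+1,j) = (x+d,y) /\ s (i,j+1) = (x,y+d).

Lemma loc_ex p s i j : (p = 3 \/ p = 4) -> inj s -> orient_pres p s ->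
  exists d, (d = 1 \/ d = -1) /\ Loc s i j d.
Proof.
  intros Hp I OP.
  destruct (s (i,j)) as [x0 y0] eqn:E0; destruct (s (i+1,j)) as [x1 y1] eqn:E1;
  destruct (s (i+1,j+1)) as [x2 y2] eqn:E2; destruct (s (i,j+1)) as [x3 y3] eqn:E3.
  assert (HH : (x1=x0+1/\y1=y0/\x3=x0/\y3=y0+1) \/ (x1=x0-1/\y1=y0/\x3=x0/\y3=y0-1)).
  { destruct (Z.eq_dec (j mod p) 0) as [Hj|Hj].
    - destruct (Aff_up p s i j x0 y0 x1 y1 x3 y3) as [A|A]; auto; lia.
    - destruct (Aff_sq p s i j x0 y0 x1 y1 x2 y2 x3 y3) as [A|A]; auto; lia. }
  destruct HH as [[? [? [? ?]]]|[? [? [? ?]]]]; subst;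
  [exists 1 | exists (-1)]; split; auto; intros x y Exy; rewrite E0 in Exy; injection Exy; intros; subst;
  rewrite E1, E3; split; f_equal; lia.
Qed.

Lemma loc_right p s i j d d' : (p = 3 \/ p = 4) -> inj s -> orient_pres p s ->
  (d = 1 \/ d = -1) -> (d' = 1 \/ d' = -1) -> Loc s i j d -> Loc s (i+1) j d' -> d = d'.
Proof.
  intros Hp I OP Hd Hd' L1 L2.
  destruct (s (i,j)) as [x y] eqn:E0.
  destruct (L1 x y E0) as [E1 E3].
  destruct (L2 _ _ E1) as [_ E2].
  destruct (Z.eq_dec (j mod p) 0) as [Hj|Hj].
  - destruct (Aff_dn p s i j (x+d) y (x+d) (y+d') x (y+d)) as [A|A]; auto; lia.
  - destruct (Aff_sq p s i j x y (x+d) y (x+d) (y+d') x (y+d)) as [A|A]; auto; lia.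
Qed.

Lemma loc_up p s i j d d' : (p = 3 \/ p = 4) -> inj s -> orient_pres p s ->
  (d = 1 \/ d = -1) -> (d' = 1 \/ d' = -1) -> Loc s i j d -> Loc s i (j+1) d' -> d = d'.
Proof.
  intros Hp I OP Hd Hd' L1 L2.
  destruct (s (i,j)) as [x y] eqn:E0.
  destruct (L1 x y E0) as [E1 E3].
  destruct (L2 _ _ E3) as [E2 _].
  destruct (Z.eq_dec (j mod p) 0) as [Hj|Hj].
  - destruct (Aff_dn p s i j (x+d) y (x+d') (y+d) x (y+d)) as [A|A]; auto; lia.
  - destruct (Aff_sq p s i j x y (x+d) y (x+d') (y+d) x (y+d)) as [A|A]; auto; lia.
Qed.

Lemma Zind (P : Z -> Prop) : P 0 -> (forall i, P i -> P (i+1)) -> (forall i, P (i+1) -> P i) -> forall i, P i.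
Proof.
  intros H0 HS HP i. induction i using Z.peano_ind; auto.
  - rewrite <- Z.add_1_r; auto.
  - apply HP. replace (Z.pred i + 1) with i by lia. auto.
Qed.

Lemma global_loc p s : (p = 3 \/ p = 4) -> inj s -> orient_pres p s ->
  exists d, (d = 1 \/ d = -1) /\ forall i j, Loc s i j d.
Proof.
  intros Hp I OP.
  destruct (loc_ex p s 0 0 Hp I OP) as [d [Hd L0]].
  exists d; split; auto.
  assert (R : forall j, Loc s 0 j d -> forall i, Loc s i j d).
  { intros j Lj. apply Zind; auto.
    - intros i Li. destruct (loc_ex p s (i+1) j Hp I OP) as [d' [Hd' L']].
      replace d with d'; auto. symmetry; eapply loc_right; eauto.
    - intros i Li. destruct (loc_ex p s i j Hp I OP) as [d' [Hd' L']].
      replace d with d'; auto. eapply loc_right; eauto. }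
  intros i j. apply R. revert j. apply Zind; auto.
  - intros j Lj. destruct (loc_ex p s 0 (j+1) Hp I OP) as [d' [Hd' L']].
    replace d with d'; auto. symmetry; eapply loc_up; eauto.
  - intros j Lj. destruct (loc_ex p s 0 j Hp I OP) as [d' [Hd' L']].
    replace d with d'; auto. eapply loc_up; eauto.
Qed.

Lemma global_form p s : (p = 3 \/ p = 4) -> inj s -> orient_pres p s ->
  exists d x0 y0, (d = 1 \/ d = -1) /\ forall i j, s (i,j) = (x0 + d*i, y0 + d*j).
Proof.
  intros Hp I OP.
  destruct (global_loc p s Hp I OP) as [d [Hd L]].
  destruct (s (0,0)) as [x0 y0] eqn:E0.
  exists d, x0, y0; split; auto.
  assert (R0 : forall i, s (i,0) = (x0 + d*i, y0 + d*0)).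
  { apply Zind.
    - rewrite E0; f_equal; lia.
    - intros i Hi. destruct (L i 0 _ _ Hi) as [A _]. rewrite A. destruct Hd; subst; f_equal; lia.
    - intros i Hi. destruct (s (i,0)) as [u v] eqn:Ei. destruct (L i 0 _ _ Ei) as [A _].
      rewrite Hi in A. injection A; intros. destruct Hd; subst; f_equal; lia. }
  intros i. apply Zind.
  - rewrite R0; auto.
  - intros j Hj. destruct (L i j _ _ Hj) as [_ A]. rewrite A. destruct Hd; subst; f_equal; lia.
  - intros j Hj. destruct (s (i,j)) as [u v] eqn:Ei. destruct (L i j _ _ Ei) as [_ A].
    rewrite Hj in A. injection A; intros. destruct Hd; subst; f_equal; lia.
Qed.
Definition E0 (p : Z) (u v : V) : Prop := match u, v with (i,j),(k,l) =>
  (k = i+1 /\ l = j) \/ (k = i /\ l = j+1) \/ (j mod p = 0 /\ k = i-1 /\ l = j+1) end.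

Lemma edge_E0 p u v : edgeK p u v -> E0 p u v \/ E0 p v u.
Proof.
  intros [f [[i [j [[Hj [->| ->]] | [Hj ->]]]] [k [rest [Hr|Hr]]]]];
  unfold up, dn, sq, rotl in Hr;
  destruct k as [|[|[|[|[|k]]]]]; simpl in Hr; try discriminate;
  injection Hr; intros; subst; simpl; lia.
Qed.

Lemma E0_edge p u v : E0 p u v -> edgeK p u v.
Proof.
  destruct u as [i j], v as [k l]; simpl.
  intros [[-> ->]|[[-> ->]|[Hj [-> ->]]]].
  - destruct (Z.eq_dec (j mod p) 0) as [Hj|Hj].
    + exists (up i j); split. exists i, j; left; auto. exists 0%nat, [(i,j+1)]; left; reflexivity.
    + exists (sq i j); split. exists i, j; right; auto. exists 0%nat, [(i+1,j+1);(i,j+1)]; left; reflexivity.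
  - destruct (Z.eq_dec (j mod p) 0) as [Hj|Hj].
    + exists (up i j); split. exists i, j; left; auto. exists 2%nat, [(i+1,j)]; right; reflexivity.
    + exists (sq i j); split. exists i, j; right; auto. exists 3%nat, [(i+1,j);(i+1,j+1)]; right; reflexivity.
  - exists (up (i-1) j); split. exists (i-1), j; left; auto. exists 1%nat, [(i-1,j)]; left.
    unfold up, rotl; simpl. replace (i-1+1) with i by lia. reflexivity.
Qed.

Lemma edgeK_sym p u v : edgeK p u v -> edgeK p v u.
Proof. intros [f [Hf [k [r [H|H]]]]]; exists f; split; auto; exists k, r; auto. Qed.

Lemma aut_inj p s : isAutK p s -> inj s.
Proof. intros [[t Ht] _] x y E. rewrite <- (proj1 (Ht x)), <- (proj1 (Ht y)), E. reflexivity. Qed.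

Lemma G_trans p G g : (p = 3 \/ p = 4) -> torus_quotient p G -> G g ->
  exists a b, forall x, g x = (fst x + a, snd x + b).
Proof.
  intros Hp [HG [HA [HF [HO _]]]] Hg.
  destruct (global_form p g Hp (aut_inj p g (HA g Hg)) (HO g Hg)) as [d [x0 [y0 [Hd Hf]]]].
  destruct Hd as [->| ->].
  { exists x0, y0. intros [i j]. rewrite Hf. cbn [fst snd]. f_equal; lia. }
  exfalso.
  assert (Hall : forall x, g x = x).
  { apply (HF g Hg).
    pose proof (Z.div_mod x0 2 ltac:(lia)) as D1. pose proof (Z.mod_pos_bound x0 2 ltac:(lia)) as B1.
    pose proof (Z.div_mod y0 2 ltac:(lia)) as D2. pose proof (Z.mod_pos_bound y0 2 ltac:(lia)) as B2.
    set (q1 := x0 / 2) in *. set (q2 := y0 / 2) in *. set (r1 := x0 mod 2) in *. set (r2 := y0 mod 2) in *.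
    clearbody q1 q2 r1 r2.
    assert (Hr : (r1 = 0 \/ r1 = 1) /\ (r2 = 0 \/ r2 = 1)) by lia.
    destruct Hr as [[H1|H1] [H2|H2]].
    - left. exists (q1,q2). rewrite Hf. f_equal; lia.
    - right; left. exists (q1,q2), (q1,q2+1). split.
      + apply E0_edge. simpl. lia.
      + right. rewrite !Hf. split; f_equal; lia.
    - right; left. exists (q1,q2), (q1+1,q2). split.
      + apply E0_edge. simpl. lia.
      + right. rewrite !Hf. split; f_equal; lia.
    - destruct (Z.eq_dec (q2 mod p) 0) as [Hq|Hq].
      + right; left. exists (q1+1,q2), (q1,q2+1). split.
        * apply E0_edge. simpl. lia.
        * right. rewrite !Hf. split; f_equal; lia.
      + right; right. exists (sq q1 q2). split. { exists q1, q2; right; auto. }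
        assert (Hin : forall x, In x (sq q1 q2) -> In (g x) (sq q1 q2)).
        { unfold sq; simpl; intros x [<-|[<-|[<-|[<-|[]]]]]; rewrite Hf;
          [right;right;left|right;right;right;left|left|right;left]; f_equal; lia. }
        assert (Hgg : forall x, g (g x) = x).
        { intros [i j]. rewrite !Hf. f_equal; lia. }
        intros z; split.
        * intros Hz. exists (g z). split; auto.
        * intros [x [Hx <-]]. auto. }
  pose proof (Hall (0,0)) as A. pose proof (Hall (1,0)) as B.
  rewrite Hf in A, B. injection A; injection B; intros; lia.
Qed.

Definition sig (e : bool) (c1 c2 : Z) (x : V) : V :=
  if e then (c1 + fst x, c2 + snd x) else (c1 - fst x, c2 - snd x).
Definition sigOK (p : Z) (e : bool) (c2 : Z) : Prop :=
  if e then c2 mod p = 0 else (c2 - 1) mod p = 0.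

Lemma sig_E0 p e c1 c2 u v : (p = 3 \/ p = 4) -> sigOK p e c2 -> E0 p u v -> edgeK p (sig e c1 c2 u) (sig e c1 c2 v).
Proof.
  intros Hp Ho H. destruct u as [i j], v as [k l].
  destruct e; simpl in *.
  - apply E0_edge. simpl. destruct Hp; subst; zl.
  - apply edgeK_sym, E0_edge. simpl. destruct Hp; subst; zl.
Qed.

Lemma sig_face p e c1 c2 f : (p = 3 \/ p = 4) -> sigOK p e c2 -> faceK p f ->
  exists g, faceK p g /\ (forall x, In x f -> In (sig e c1 c2 x) g) /\
    (forall y, In y g -> exists x, In x f /\ sig e c1 c2 x = y).
Proof.
  intros Hp Ho [i [j [[Hj [->| ->]] | [Hj ->]]]]; destruct e; simpl in Ho.
  - exists (up (c1+i) (c2+j)). split. { exists (c1+i), (c2+j); left; split; [destruct Hp; subst; zl | auto]. }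
    unfold up; simpl; split.
    + intros x [<-|[<-|[<-|[]]]]; simpl; [left|right;left|right;right;left]; f_equal; lia.
    + intros y [<-|[<-|[<-|[]]]]; [exists (i,j)|exists (i+1,j)|exists (i,j+1)]; simpl; (split; [tauto| f_equal; lia]).
  - exists (dn (c1-i-1) (c2-j-1)). split. { exists (c1-i-1), (c2-j-1); left; split; [destruct Hp; subst; zl | auto]. }
    unfold up, dn; simpl; split.
    + intros x [<-|[<-|[<-|[]]]]; simpl; [right;left|right;right;left|left]; f_equal; lia.
    + intros y [<-|[<-|[<-|[]]]]; [exists (i,j+1)|exists (i,j)|exists (i+1,j)]; simpl; (split; [tauto| f_equal; lia]).
  - exists (dn (c1+i) (c2+j)). split. { exists (c1+i), (c2+j); left; split; [destruct Hp; subst; zl | auto]. }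
    unfold dn; simpl; split.
    + intros x [<-|[<-|[<-|[]]]]; simpl; [left|right;left|right;right;left]; f_equal; lia.
    + intros y [<-|[<-|[<-|[]]]]; [exists (i+1,j)|exists (i+1,j+1)|exists (i,j+1)]; simpl; (split; [tauto| f_equal; lia]).
  - exists (up (c1-i-1) (c2-j-1)). split. { exists (c1-i-1), (c2-j-1); left; split; [destruct Hp; subst; zl | auto]. }
    unfold up, dn; simpl; split.
    + intros x [<-|[<-|[<-|[]]]]; simpl; [right;right;left|left|right;left]; f_equal; lia.
    + intros y [<-|[<-|[<-|[]]]]; [exists (i+1,j+1)|exists (i,j+1)|exists (i+1,j)]; simpl; (split; [tauto| f_equal; lia]).
  - exists (sq (c1+i) (c2+j)). split. { exists (c1+i), (c2+j); right; split; [destruct Hp; subst; zl | auto]. }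
    unfold sq; simpl; split.
    + intros x [<-|[<-|[<-|[<-|[]]]]]; simpl; [left|right;left|right;right;left|right;right;right;left]; f_equal; lia.
    + intros y [<-|[<-|[<-|[<-|[]]]]]; [exists (i,j)|exists (i+1,j)|exists (i+1,j+1)|exists (i,j+1)]; simpl; (split; [tauto| f_equal; lia]).
  - exists (sq (c1-i-1) (c2-j-1)). split. { exists (c1-i-1), (c2-j-1); right; split; [destruct Hp; subst; zl | auto]. }
    unfold sq; simpl; split.
    + intros x [<-|[<-|[<-|[<-|[]]]]]; simpl; [right;right;left|right;right;right;left|left|right;left]; f_equal; lia.
    + intros y [<-|[<-|[<-|[<-|[]]]]]; [exists (i+1,j+1)|exists (i,j+1)|exists (i,j)|exists (i+1,j)]; simpl; (split; [tauto| f_equal; lia]).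
Qed.

Lemma sig_inv p e c1 c2 : (p = 3 \/ p = 4) -> sigOK p e c2 -> exists c1' c2', sigOK p e c2' /\
  forall x, sig e c1' c2' (sig e c1 c2 x) = x /\ sig e c1 c2 (sig e c1' c2' x) = x.
Proof.
  intros Hp Ho. destruct e.
  - exists (-c1), (-c2). split. { simpl in *. destruct Hp; subst; zl. }
    intros [i j]; simpl; split; f_equal; lia.
  - exists c1, c2. split; auto. intros [i j]; simpl; split; f_equal; lia.
Qed.

Definition Gtr (G : (V -> V) -> Prop) := forall g, G g -> exists a b, forall x, g x = (fst x + a, snd x + b).

Lemma so_refl G u : is_group G -> sameorb G u u.
Proof. intros [H1 _]. exists (fun x => x); auto. Qed.

Lemma so_sym G u v : is_group G -> sameorb G u v -> sameorb G v u.
Proof. intros [_ [_ H3]] [g [Hg <-]]. destruct (H3 g Hg) as [h [Hh Hi]]. exists h; split; auto. apply Hi. Qed.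

Lemma so_trans G u v w : is_group G -> sameorb G u v -> sameorb G v w -> sameorb G u w.
Proof. intros [_ [H2 _]] [g [Hg <-]] [h [Hh <-]]. exists (fun x => h (g x)); split; auto. Qed.

Lemma so_sig G e c1 c2 u v : is_group G -> Gtr G -> sameorb G u v -> sameorb G (sig e c1 c2 u) (sig e c1 c2 v).
Proof.
  intros HG HT [g [Hg <-]]. destruct (HT g Hg) as [a [b Hgf]].
  destruct e.
  - exists g; split; auto. rewrite !Hgf. destruct u; simpl; f_equal; lia.
  - destruct HG as [_ [_ H3]]. destruct (H3 g Hg) as [h [Hh Hi]].
    destruct (HT h Hh) as [a' [b' Hhf]].
    pose proof (proj1 (Hi (0,0))) as Z0. rewrite Hgf, Hhf in Z0. simpl in Z0. injection Z0; intros.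
    exists h; split; auto. rewrite Hhf, Hgf. destruct u; simpl; f_equal; lia.
Qed.

Lemma sig_isAutX p G e c1 c2 : (p = 3 \/ p = 4) -> is_group G -> Gtr G -> sigOK p e c2 ->
  isAutX p G (sig e c1 c2).
Proof.
  intros Hp HG HT Ho.
  destruct (sig_inv p e c1 c2 Hp Ho) as [c1' [c2' [Ho' Hi]]].
  set (s := sig e c1 c2) in *. set (s' := sig e c1' c2') in *.
  assert (Es : forall u v, E0 p u v \/ E0 p v u -> edgeK p (s u) (s v)).
  { intros u v [H|H]; [|apply edgeK_sym]; apply sig_E0; auto. }
  assert (Es' : forall u v, E0 p u v \/ E0 p v u -> edgeK p (s' u) (s' v)).
  { intros u v [H|H]; [|apply edgeK_sym]; apply sig_E0; auto. }
  split; [|split; [|split; [|split; [|split; [|split]]]]].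
  - intros u v H. apply so_sig; auto.
  - intros u v H. apply (so_sig G e c1' c2') in H; auto. fold s' in H.
    rewrite !(proj1 (Hi _)) in H. exact H.
  - intros w. exists (s' w). rewrite (proj2 (Hi w)). apply so_refl; auto.
  - intros u v H. exists (s u), (s v). split; [apply Es, edge_E0; auto| split; apply so_refl; auto].
  - intros u' v' H. exists (s' u'), (s' v'). split; [apply Es', edge_E0; auto|].
    rewrite !(proj2 (Hi _)). split; apply so_refl; auto.
  - intros f Hf. destruct (sig_face p e c1 c2 f Hp Ho Hf) as [g [Hg [H1 H2]]].
    exists g; split; auto. split.
    + intros x Hx. exists (s x); split; auto. apply so_refl; auto.
    + intros y Hy. destruct (H2 y Hy) as [x [Hx <-]]. exists x; split; auto. apply so_refl; auto.
  - intros g Hg. destruct (sig_face p e c1' c2' g Hp Ho' Hg) as [f [Hf [H1 H2]]].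
    exists f; split; auto. split.
    + intros x Hx. destruct (H2 x Hx) as [y [Hy <-]]. exists y; split; auto.
      fold s'. rewrite (proj2 (Hi y)). apply so_refl; auto.
    + intros y Hy. exists (s' y); split; auto. rewrite (proj2 (Hi y)). apply so_refl; auto.
Qed.

Theorem theorem1 (p : Z) (G : (V -> V) -> Prop) :
  (p = 3 \/ p = 4) ->
  torus_quotient p G ->
  polyhedral_quotient p G ->
  exists a b : V,
    ~ autX_orb p G a b /\
    (forall v : V, autX_orb p G a v \/ autX_orb p G b v).
Proof.
  intros Hp TQ PQ.
  assert (HT : Gtr G) by (intros g Hg; eapply G_trans; eauto).
  assert (HG : is_group G) by (destruct TQ; auto).
  assert (HA : forall g, G g -> isAutK p g) by (destruct TQ as [_ [H _]]; auto).
  destruct PQ as [_ [_ P3]].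
  exists (0,0), (0,2). split.
  - intros [t [Ht Hs]].
    destruct Ht as [C1 [C2 [C3 [C4 _]]]].
    assert (Hd : forall x y, edgeK p (0,0) x -> edgeK p (0,0) y -> sameorb G x y -> x = y).
    { intros x y Ex Ey Hxy. destruct (P3 _ _ _ _ Ex Ey (so_refl G (0,0) HG) Hxy) as [h [Hh [H1 H2]]].
      destruct (HT h Hh) as [a [b Hf]]. rewrite Hf in H1, H2. simpl in H1. injection H1; intros.
      subst. destruct x; simpl; f_equal; lia. }
    assert (Hc : forall x y m, edgeK p (0,0) x -> edgeK p (0,0) y -> sameorb G (t x) m -> sameorb G (t y) m -> x = y).
    { intros x y m Ex Ey H1 H2. apply Hd; auto. apply C2. apply (so_trans G _ m _ HG); auto. apply so_sym; auto. }
    assert (Hn : forall n, edgeK p (0,0) n -> exists m, In m [(1,2);(-1,2);(0,3);(0,1)] /\ sameorb G (t n) m).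
    { intros n En. destruct (C4 _ _ En) as [u' [v' [Euv [S1 S2]]]].
      assert (S3 : sameorb G u' (0,2)) by (apply (so_trans G _ (t (0,0)) _ HG); [apply (so_sym G _ _ HG); auto | auto]).
      destruct S3 as [h [Hh Hhu]].
      pose proof (proj1 (proj1 (proj2 (HA h Hh)) u' v') Euv) as Ew. rewrite Hhu in Ew.
      exists (h v'). split.
      - apply edge_E0 in Ew. destruct (h v') as [k l]. simpl in Ew.
        assert (k = 1 /\ l = 2 \/ k = -1 /\ l = 2 \/ k = 0 /\ l = 3 \/ k = 0 /\ l = 1) by (destruct Hp; subst; zl).
        simpl. destruct H as [[-> ->]|[[-> ->]|[[-> ->]|[-> ->]]]]; tauto.
      - apply (so_trans G _ v' _ HG); auto. exists h; auto. }
    assert (N1 : edgeK p (0,0) (1,0)) by (apply E0_edge; simpl; lia).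
    assert (N2 : edgeK p (0,0) (-1,0)) by (apply edgeK_sym, E0_edge; simpl; lia).
    assert (N3 : edgeK p (0,0) (0,1)) by (apply E0_edge; simpl; lia).
    assert (N4 : edgeK p (0,0) (0,-1)) by (apply edgeK_sym, E0_edge; simpl; lia).
    assert (N5 : edgeK p (0,0) (-1,1)) by (apply E0_edge; simpl; right; right; split; [apply Z.mod_0_l; destruct Hp; lia | lia]).
    Ltac collide Hc := match goal with
      | H1 : sameorb _ (_ ?x) ?m, H2 : sameorb _ (_ ?y) ?m |- _ =>
        let E := fresh in assert (E : x = y) by (eapply Hc; eauto); discriminate E end.
    destruct (Hn _ N1) as [m1 [I1 S1]]; simpl in I1; destruct I1 as [<-|[<-|[<-|[<-|[]]]]];
    destruct (Hn _ N2) as [m2 [I2 S2]]; simpl in I2; destruct I2 as [<-|[<-|[<-|[<-|[]]]]]; try collide Hc;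
    destruct (Hn _ N3) as [m3 [I3 S3]]; simpl in I3; destruct I3 as [<-|[<-|[<-|[<-|[]]]]]; try collide Hc;
    destruct (Hn _ N4) as [m4 [I4 S4]]; simpl in I4; destruct I4 as [<-|[<-|[<-|[<-|[]]]]]; try collide Hc;
    destruct (Hn _ N5) as [m5 [I5 S5]]; simpl in I5; destruct I5 as [<-|[<-|[<-|[<-|[]]]]]; collide Hc.
  - intros [i j].
    assert (Hc : j mod p = 0 \/ (j-1) mod p = 0 \/ (j-2) mod p = 0 \/ (p = 4 /\ (j+2-1) mod p = 0))
      by (destruct Hp; subst; zl).
    destruct Hc as [Hc|[Hc|[Hc|[-> Hc]]]].
    + left. exists (sig true i j). split. apply sig_isAutX; auto.
      replace (sig true i j (0,0)) with (i,j) by (simpl; f_equal; lia). apply so_refl; auto.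
    + left. exists (sig false i j). split. apply sig_isAutX; auto.
      replace (sig false i j (0,0)) with (i,j) by (simpl; f_equal; lia). apply so_refl; auto.
    + right. exists (sig true i (j-2)). split. apply sig_isAutX; auto.
      replace (sig true i (j-2) (0,2)) with (i,j) by (simpl; f_equal; lia). apply so_refl; auto.
    + right. exists (sig false i (j+2)). split. apply sig_isAutX; auto.
      replace (sig false i (j+2) (0,2)) with (i,j) by (simpl; f_equal; lia). apply so_refl; auto.
Qed.
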